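(* Let $\mu_{T}$ be the Möbius function of the poset $T_d$ of types of degree $d$. If $\tau\in T_d$ is ramified, then $\mu_T(\tau,(d^1))=0$.
   Context: A type of degree $d$ is a finite multiset of pairs $(b,m)$ of positive integers with $\sum bm=d$. $T_d$ is the set of types of degree $d$ with the partial order generated by elementary merges (replace two pairs $(d_1,m),(d_2,m)$ with equal second entry by $(d_1+d_2,m)$) and elementary forgets (replace a pair $(d_1,m_1)$ by $(d_1,m_1-a),(d_1,a)$ with $0<a<m_1$): $\tau\le\lambda$ iff $\lambda$ is obtained from $\tau$ by a finite sequence of such operations. Its unique maximal element is $(d^1)=\{(d,1)\}$. A type is unramified if all second entries equal $1$, and ramified otherwise. The Möbius function $\mu_T$ is defined by $\sum_{\tau\le\kappa\le\lambda}\mu_T(\kappa,\lambda)=\delta_{\tau,\lambda}$ for $\tau\le\lambda$. *)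

(* Defs.v *)
From Stdlib Require Import Relations.
From mathcomp Require Import all_boot all_order all_algebra.
From mathcomp Require Import boolp.
Set Implicit Arguments. Unset Strict Implicit. Unset Printing Implicit Defensive.
Import GRing.Theory.

(* A type of degree d is a finite multiset of pairs (b,m) of positive
   integers with sum b*m = d.  Every such pair has b,m <= d and every
   multiplicity is <= d, so we encode a multiset as a multiplicity function
   on 'I_(d+1) x 'I_(d+1) with values in 'I_(d+1). *)
Definition pair_t (d : nat) := ('I_d.+1 * 'I_d.+1)%type.
Definition mtype (d : nat) := {ffun pair_t d -> 'I_d.+1}.

Definition mult (d : nat) (f : mtype d) (p : nat * nat) : nat :=
  if (p.1 <= d) && (p.2 <= d) then nat_of_ord (f (inord p.1, inord p.2)) else 0.

Definition is_type (d : nat) (f : mtype d) : bool :=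
  [forall p : pair_t d, (0 < f p) ==> (0 < p.1) && (0 < p.2)] &&
  ((\sum_(p : pair_t d) f p * p.1 * p.2)%N == d).

Definition Td (d : nat) := {f : mtype d | is_type f}.

Definition tmult (d : nat) (t : Td d) (p : nat * nat) : nat := mult (val t) p.

(* elementary merge: replace (d1,m),(d2,m) by (d1+d2,m) *)
Definition merge_step (d : nat) (t l : Td d) : Prop :=
  exists d1 d2 m : nat, [/\ 0 < d1, 0 < d2, 0 < m &
    forall p : nat * nat,
      tmult l p + (p == (d1, m)) + (p == (d2, m)) = tmult t p + (p == (d1 + d2, m))]%N.

(* elementary forget: replace (d1,m1) by (d1,m1-a),(d1,a), 0<a<m1 *)
Definition forget_step (d : nat) (t l : Td d) : Prop :=
  exists d1 m1 a : nat, [/\ 0 < d1, 0 < a & a < m1 /\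
    forall p : nat * nat,
      tmult l p + (p == (d1, m1)) = tmult t p + (p == (d1, m1 - a)) + (p == (d1, a))]%N.

Definition type_le (d : nat) : relation (Td d) :=
  clos_refl_trans (Td d) (fun t l => merge_step t l \/ forget_step t l).

Definition is_top (d : nat) (l : Td d) : Prop :=
  forall p : nat * nat, tmult l p = (p == (d, 1%N)).

Definition ramified (d : nat) (t : Td d) : Prop :=
  exists b m : nat, (0 < tmult t (b, m))%N /\ m <> 1%N.

Definition is_mobius (d : nat) (mu : Td d -> Td d -> int) : Prop :=
  forall t l : Td d, type_le t l ->
    (\sum_(k : Td d | `[< type_le t k /\ type_le k l >]) mu k l)%R
      = Posz (t == l).

(* Main.v *)
Require Import Defs.
From mathcomp Require Import all_boot all_order all_algebra.
From mathcomp Require Import boolp.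
From Stdlib Require Import Relations.
From mathcomp Require Import zify.
Set Implicit Arguments. Unset Strict Implicit. Unset Printing Implicit Defensive.

Definition pn (d : nat) (p : pair_t d) : nat * nat := (nat_of_ord p.1, nat_of_ord p.2).
Definition Wt (d : nat) (g F : nat * nat -> nat) : nat :=
  \sum_(p : pair_t d) g (pn p) * F (pn p).

Lemma pn_inj d : injective (@pn d).
Proof. by case=> [a b] [c e]; rewrite /pn /= => -[/val_inj -> /val_inj ->]. Qed.

Lemma tmult_pn d (t : Td d) (p : pair_t d) : tmult t (pn p) = val t p.
Proof.
have h1 : (p.1 <= d)%N := ltn_ord p.1. have h2 : (p.2 <= d)%N := ltn_ord p.2.
rewrite /tmult /mult /pn /= h1 h2 /= !inord_val; by case: p h1 h2.
Qed.

Lemma tmult_supp d (t : Td d) q : (0 < tmult t q)%N ->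
  [/\ (0 < q.1)%N, (0 < q.2)%N, (q.1 <= d)%N & (q.2 <= d)%N].
Proof.
rewrite /tmult /mult; case: ifP => // /andP [h1 h2] hpos.
have := valP t; rewrite /is_type => /andP [/forallP /(_ (inord q.1, inord q.2)) /implyP /(_ hpos) /andP [] /=].
by rewrite !inordK ?ltnS.
Qed.

Lemma Wt_weight d (t : Td d) : Wt d (tmult t) (fun p => p.1 * p.2) = d.
Proof.
have := valP t; rewrite /is_type => /andP [_ /eqP E].
rewrite -[in RHS]E; by apply: eq_bigr => p _; rewrite tmult_pn mulnA.
Qed.

Lemma Wt_delta d (F : nat * nat -> nat) x : (x.1 <= d)%N -> (x.2 <= d)%N ->
  Wt d (fun p => nat_of_bool (p == x)) F = F x.
Proof.
move=> h1 h2; rewrite /Wt (bigD1 ((inord x.1, inord x.2) : pair_t d)) //=.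
have E : pn ((inord x.1, inord x.2) : pair_t d) = x.
  by rewrite /pn /= !inordK ?ltnS // -surjective_pairing.
rewrite E eqxx mul1n big1 ?addn0 // => p hp.
suff -> : (pn p == x) = false by [].
apply/negbTE; apply: contra hp => /eqP hx; apply/eqP; apply: pn_inj; by rewrite E.
Qed.

Lemma Wt_add d g h F : Wt d (fun p => g p + h p) F = Wt d g F + Wt d h F.
Proof. by rewrite /Wt -big_split; apply: eq_bigr => p _; rewrite mulnDl. Qed.

Lemma Wt_ext d g h F : (forall p, g p = h p) -> Wt d g F = Wt d h F.
Proof. by move=> H; apply: eq_bigr => p _; rewrite H. Qed.

Lemma sum_pos_ex (I : finType) (F : I -> nat) : (0 < \sum_(i : I) F i)%N -> exists i, (0 < F i)%N.
Proof.
move=> h; apply/existsP; apply: contraLR h; rewrite negb_exists => /forallP H.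
rewrite -eqn0Ngt; apply/eqP; rewrite big1 // => i _.
by move: (H i); rewrite -eqn0Ngt => /eqP.
Qed.

Lemma Wt_pos_ex d g F : (0 < Wt d g F)%N -> exists p : pair_t d, (0 < g (pn p))%N /\ (0 < F (pn p))%N.
Proof. by move=> /sum_pos_ex [p]; rewrite muln_gt0 => /andP[]; exists p. Qed.

Lemma Wt_ge d g F (p : pair_t d) : (g (pn p) * F (pn p) <= Wt d g F)%N.
Proof. by rewrite /Wt (bigD1 p) //= leq_addr. Qed.

Lemma mk_exists d (g : nat * nat -> nat) :
  (forall q, (0 < g q)%N -> [/\ (0 < q.1)%N, (0 < q.2)%N, (q.1 <= d)%N & (q.2 <= d)%N]) ->
  Wt d g (fun p => p.1 * p.2) = d -> exists t : Td d, forall q, tmult t q = g q.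
Proof.
move=> hs hw.
have hb : forall q, (g q <= d)%N.
  move=> q; case: (posnP (g q)) => [-> //|/hs [a1 a2 a3 a4]].
  have := Wt_ge g (fun p => p.1 * p.2) ((inord q.1, inord q.2) : pair_t d).
  rewrite hw /pn /= !inordK ?ltnS // => H; apply: leq_trans H.
  by rewrite -surjective_pairing leq_pmulr // muln_gt0 a1 a2.
pose f : mtype d := [ffun p => inord (g (pn p))].
have fE : forall p, nat_of_ord (f p) = g (pn p).
  by move=> p; rewrite ffunE inordK ?ltnS.
have ft : is_type f.
  apply/andP; split.
    apply/forallP => p; apply/implyP; rewrite fE => /hs [a1 a2 _ _].
    by rewrite a1 a2.
  apply/eqP; rewrite -[in RHS]hw; apply: eq_bigr => p _; by rewrite fE mulnA.
exists (exist _ f ft) => q; rewrite /tmult /mult /=.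
case: ifP => [/andP [h1 h2]|/negbT hn].
  by rewrite fE /pn /= !inordK ?ltnS // -surjective_pairing.
case: (posnP (g q)) => // /hs [_ _ a3 a4]; by rewrite a3 a4 in hn.
Qed.

Lemma Td_ext d (t l : Td d) : (forall q, tmult t q = tmult l q) -> t = l.
Proof.
move=> H; apply: val_inj; apply/ffunP => p; apply: val_inj.
by have := H (pn p); rewrite !tmult_pn.
Qed.

Lemma tmult_out d (t : Td d) q : ~~ ((q.1 <= d) && (q.2 <= d))%N -> tmult t q = 0.
Proof. by move=> h; rewrite /tmult /mult (negbTE h). Qed.

Lemma pos_range d (t : Td d) q : (0 < tmult t q)%N -> (q.1 <= d)%N /\ (q.2 <= d)%N.
Proof. by case/tmult_supp. Qed.

Lemma merge_facts d (t l : Td d) d1 d2 m :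
  (0 < d1)%N -> (0 < d2)%N ->
  (forall p : nat * nat,
      tmult l p + (p == (d1, m)) + (p == (d2, m)) = tmult t p + (p == (d1 + d2, m)))%N ->
  [/\ (0 < tmult t (d1, m))%N, (0 < tmult t (d2, m))%N & (0 < tmult l (d1 + d2, m))%N].
Proof.
move=> h1 h2 H; split.
- have := H (d1, m); rewrite !xpair_eqE !eqxx !andbT; lia.
- have := H (d2, m); rewrite !xpair_eqE !eqxx !andbT; lia.
- have := H (d1 + d2, m); rewrite !xpair_eqE !eqxx !andbT; lia.
Qed.

Lemma merge_W d (t l : Td d) d1 d2 m F :
  (0 < d1)%N -> (0 < d2)%N ->
  (forall p : nat * nat,
      tmult l p + (p == (d1, m)) + (p == (d2, m)) = tmult t p + (p == (d1 + d2, m)))%N ->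
  Wt d (tmult l) F + F (d1, m) + F (d2, m) = Wt d (tmult t) F + F (d1 + d2, m).
Proof.
move=> h1 h2 H; have [x1 x2 x3] := merge_facts h1 h2 H.
have [r1 r2] := pos_range x1; have [r3 r4] := pos_range x2; have [r5 r6] := pos_range x3.
have := Wt_ext d F H; rewrite !Wt_add !Wt_delta //.
Qed.

Lemma forget_facts d (t l : Td d) d1 m1 a :
  (0 < a)%N -> (a < m1)%N ->
  (forall p : nat * nat,
      tmult l p + (p == (d1, m1)) = tmult t p + (p == (d1, m1 - a)) + (p == (d1, a)))%N ->
  (0 < tmult t (d1, m1))%N.
Proof.
move=> h1 h2 H; have := H (d1, m1); rewrite !xpair_eqE !eqxx /=; lia.
Qed.

Lemma forget_W d (t l : Td d) d1 m1 a F :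
  (0 < a)%N -> (a < m1)%N ->
  (forall p : nat * nat,
      tmult l p + (p == (d1, m1)) = tmult t p + (p == (d1, m1 - a)) + (p == (d1, a)))%N ->
  Wt d (tmult l) F + F (d1, m1) = Wt d (tmult t) F + F (d1, m1 - a) + F (d1, a).
Proof.
move=> h1 h2 H; have x1 := forget_facts h1 h2 H.
have [/= r1 r2] := pos_range x1.
have := Wt_ext d F H; rewrite !Wt_add !Wt_delta //=; try lia.
Qed.

Definition Am d (t : Td d) := Wt d (tmult t) (fun p => p.1).
Definition Bm d (t : Td d) := Wt d (tmult t) (fun p => p.2).
Definition Mm d (t : Td d) := Bm t + (d - Am t).

Lemma Am_le d (t : Td d) : (Am t <= d)%N.
Proof.
rewrite -{2}(Wt_weight t) /Am /Wt; apply: leq_sum => p _.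
case: (posnP (tmult t (pn p))) => [->//|/tmult_supp [_ h _ _]].
by rewrite leq_mul2l leq_pmulr // orbT.
Qed.

Definition step d (t l : Td d) := merge_step t l \/ forget_step t l.

Lemma step_M d (t l : Td d) : step t l -> (Mm l < Mm t)%N.
Proof.
move=> hs; have := Am_le l; have := Am_le t; move: hs.
case=> [[d1 [d2 [m [h1 h2 h3 H]]]] | [d1 [m1 [a [h1 h2 [h3 H]]]]]].
- have EA := merge_W (fun p => p.1) h1 h2 H.
  have EB := merge_W (fun p => p.2) h1 h2 H.
  rewrite /Mm /Am /Bm /=; simpl in EA, EB; lia.
- have EA := forget_W (fun p => p.1) h2 h3 H.
  have EB := forget_W (fun p => p.2) h2 h3 H.
  rewrite /Mm /Am /Bm /=; simpl in EA, EB; lia.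
Qed.

Lemma le_M d (t k : Td d) : type_le t k -> t = k \/ (Mm k < Mm t)%N.
Proof.
elim=> [x y hs | x | x y z _ IH1 _ IH2].
- by right; apply: step_M.
- by left.
- case: IH1 => [-> //|h1]; case: IH2 => [<-|h2]; right => //; lia.
Qed.

Definition unram d (t : Td d) := forall b m, (0 < tmult t (b, m))%N -> m = 1%N.

Lemma unram_step d (t l : Td d) : unram t -> step t l -> unram l.
Proof.
move=> hu [[d1 [d2 [m [h1 h2 h3 H]]]] | [d1 [m1 [a [h1 h2 [h3 H]]]]]].
- have [x1 _ _] := merge_facts h1 h2 H.
  move=> b m' hp; have := H (b, m'); rewrite xpair_eqE.
  case: (eqVneq (b, m') (d1 + d2, m)) => [[_ ->]|ne].
    by move=> _; apply: (hu _ _ x1).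
  rewrite /= => E; apply: (hu b); lia.
- have := forget_facts h2 h3 H => /hu E; lia.
Qed.

Lemma unram_le d (t k : Td d) : type_le t k -> unram t -> unram k.
Proof.
elim=> [x y hs | x | x y z _ IH1 _ IH2] //.
- by move=> hu; apply: unram_step hs.
- by move=> /IH1 /IH2.
Qed.

Definition Fq (b : nat) (p : nat * nat) : nat := (p.1 == b) * p.2.
Definition uf d (t : Td d) (q : nat * nat) : nat :=
  if q.2 == 1%N then Wt d (tmult t) (Fq q.1) else 0.
Definition is_u d (t u : Td d) := forall q, tmult u q = uf t q.

Lemma u_exists d (hd : (0 < d)%N) (t : Td d) : exists u, is_u t u.
Proof.
apply: mk_exists.
  move=> q; rewrite /uf; case: eqP => // h2 /Wt_pos_ex [p [hp hf]].
  move: hf; rewrite /Fq muln_gt0 lt0b => /andP [/eqP e _].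
  have [a1 _ a3 _] := tmult_supp hp; move: a1 a3; rewrite e h2 => a1 a3.
  by split.
rewrite /Wt.
transitivity (\sum_(p : pair_t d) \sum_(p' : pair_t d) tmult t (pn p') *
   ((pn p').2 * ((pn p == ((pn p').1, 1%N)) * (pn p).1))).
  apply: eq_bigr => p _; rewrite /uf; case: eqP => [h2|/eqP h2].
    rewrite h2 muln1 /Wt big_distrl; apply: eq_bigr => p' _; rewrite /Fq /=.
    have h2' : nat_of_ord p.2 = 1%N := h2.
    rewrite [pn p]/pn xpair_eqE h2' eqxx andbT eq_sym.
    case: (_ == _) => /=; [by rewrite !mul1n mulnA | by rewrite !mul0n !muln0].
  rewrite mul0n big1 // => p' _.
  have h2' : (nat_of_ord p.2 == 1%N) = false := negbTE h2.
  by rewrite [pn p]/pn xpair_eqE h2' andbF mul0n !muln0.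
rewrite exchange_big /= -[RHS](Wt_weight t) /Wt; apply: eq_bigr => p' _.
rewrite -big_distrr -big_distrr /=.
have h1 : ((pn p').1 <= d)%N := ltn_ord p'.1.
have := @Wt_delta d (fun q => q.1) ((pn p').1, 1%N) h1 hd; rewrite /Wt => -> /=.
by rewrite [_ * (pn p').1]mulnC.
Qed.

Lemma Wt_step2 d g h F x y z : (x.1 <= d)%N -> (x.2 <= d)%N -> (y.1 <= d)%N -> (y.2 <= d)%N ->
  (z.1 <= d)%N -> (z.2 <= d)%N ->
  (forall q, g q + (q == x) + (q == y) = h q + (q == z))%N ->
  Wt d g F + F x + F y = Wt d h F + F z.
Proof. by move=> ? ? ? ? ? ? H; have := Wt_ext d F H; rewrite !Wt_add !Wt_delta. Qed.

Lemma Wt_step1 d g h F x y z : (x.1 <= d)%N -> (x.2 <= d)%N -> (y.1 <= d)%N -> (y.2 <= d)%N ->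
  (z.1 <= d)%N -> (z.2 <= d)%N ->
  (forall q, g q + (q == x) = h q + (q == y) + (q == z))%N ->
  Wt d g F + F x = Wt d h F + F y + F z.
Proof. by move=> ? ? ? ? ? ? H; have := Wt_ext d F H; rewrite !Wt_add !Wt_delta. Qed.

Lemma Wt_step0 d g h F x y : (x.1 <= d)%N -> (x.2 <= d)%N -> (y.1 <= d)%N -> (y.2 <= d)%N ->
  (forall q, g q + (q == x) + (q == y) = h q)%N ->
  Wt d g F + F x + F y = Wt d h F.
Proof. by move=> ? ? ? ? H; have := Wt_ext d F H; rewrite !Wt_add !Wt_delta. Qed.

Lemma unram_u d (hd : (0 < d)%N) (t u : Td d) : unram t -> is_u t u -> u = t.
Proof.
move=> hu hi; apply: Td_ext => -[b c]; rewrite hi /uf /=.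
case: eqP => [->|nc]; last first.
  case: (posnP (tmult t (b, c))) => [-> //| /hu /= e]; by case: nc.
case: (leqP b d) => hb.
  rewrite -(@Wt_delta d (tmult t) (b, 1%N)) //.
  apply: eq_bigr => p _.
  case: (posnP (tmult t (pn p))) => [->|]; first by rewrite muln0 mul0n.
  rewrite [pn p]/pn => /hu /= e.
  by rewrite /Fq /= e xpair_eqE eqxx andbT muln1 mulnC.
rewrite [RHS]tmult_out /=; last by rewrite negb_and -ltnNge hb.
apply: big1 => p _; rewrite /Fq /=.
have -> : (nat_of_ord p.1 == b) = false.
  apply/negbTE; have := ltn_ord p.1; rewrite neq_ltn => h; apply/orP; left; lia.
by rewrite muln0.
Qed.

Lemma u_unram d (t u : Td d) : is_u t u -> unram u.
Proof. by move=> hi b m; rewrite hi /uf /=; case: eqP. Qed.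

Lemma forget_uf d (t l : Td d) : forget_step t l -> forall q, uf l q = uf t q.
Proof.
move=> [d1 [m1 [a [h1 h2 [h3 H]]]]] q; rewrite /uf; case: eqP => // _.
have := forget_W (Fq q.1) h2 h3 H; rewrite /Fq /=; case: (d1 == q.1) => /=; lia.
Qed.

Lemma merge_uf d (t l : Td d) d1 d2 m : (0 < d1)%N -> (0 < d2)%N ->
  (forall p : nat * nat,
      tmult l p + (p == (d1, m)) + (p == (d2, m)) = tmult t p + (p == (d1 + d2, m)))%N ->
  forall q, (uf l q + m * (q == (d1, 1%N)) + m * (q == (d2, 1%N)) =
             uf t q + m * (q == (d1 + d2, 1%N)))%N.
Proof.
move=> h1 h2 H [b [|[|c]]]; rewrite /uf /= !xpair_eqE /= ?andbF ?muln0 //.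
have := merge_W (Fq b) h1 h2 H; rewrite /Fq /= !andbT !(eq_sym b); lia.
Qed.

Lemma chain d (d1 d2 : nat) : (0 < d1)%N -> (0 < d2)%N -> (d1 + d2 <= d)%N ->
  forall j (h : nat * nat -> nat) (a b : Td d),
  (forall q, tmult a q = h q + j * (q == (d1, 1%N)) + j * (q == (d2, 1%N)))%N ->
  (forall q, tmult b q = h q + j * (q == (d1 + d2, 1%N)))%N -> type_le a b.
Proof.
move=> h1 h2 h12; elim=> [|j IH] h a b Ha Hb.
  have -> : a = b by apply: Td_ext => q; rewrite Ha Hb !mul0n !addn0.
  exact: rt_refl.
have E : forall q, ((h q + (q == (d1 + d2, 1%N)) + j * (q == (d1, 1%N)) + j * (q == (d2, 1%N)))
   + (q == (d1, 1%N)) + (q == (d2, 1%N)) = tmult a q + (q == (d1 + d2, 1%N)))%N.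
  by move=> q; rewrite Ha; lia.
have [c Hc] : exists c : Td d, forall q, tmult c q =
   (h q + (q == (d1 + d2, 1%N)) + j * (q == (d1, 1%N)) + j * (q == (d2, 1%N)))%N.
  apply: mk_exists.
    move=> q hq; case: (posnP (h q)) => [h0|hp].
      move: hq; rewrite h0 add0n.
      case: eqP => [-> _ /=|_]; first by split => //; lia.
      case: eqP => [-> _ /=|_]; first by split => //; lia.
      case: eqP => [-> _ /=|_]; first by split => //; lia.
      by rewrite /= !muln0.
    apply: (tmult_supp (t := a)); rewrite Ha; lia.
  have H := @Wt_step2 d _ (tmult a) (fun p => p.1 * p.2) (d1, 1%N) (d2, 1%N) (d1 + d2, 1%N)
    ltac:(simpl; lia) ltac:(simpl; lia) ltac:(simpl; lia) ltac:(simpl; lia) ltac:(simpl; lia) ltac:(simpl; lia) E.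
  move: H; rewrite Wt_weight /=; lia.
apply: rt_trans (rt_step _ _ _ _ _) (IH (fun q => h q + (q == (d1 + d2, 1%N)))%N c b Hc _).
  by left; exists d1, d2, 1%N; split => // p; rewrite Hc E.
by move=> q; rewrite Hb; lia.
Qed.

Lemma u_mono d (hd : (0 < d)%N) (t k : Td d) : type_le t k ->
  forall ut uk, is_u t ut -> is_u k uk -> type_le ut uk.
Proof.
elim=> [x y [[d1 [d2 [m [h1 h2 h3 H]]]] | hf] | x | x y z _ IH1 _ IH2] ut uk hx hy.
- have [_ _ x3] := merge_facts h1 h2 H; have [/= r5 _] := pos_range x3.
  have U := merge_uf h1 h2 H.
  have hz : forall q, (m * (q == (d1 + d2, 1%N)) <= uf y q)%N.
    move=> q; case: eqP => [->|_]; last by rewrite muln0.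
    have := U (d1 + d2, 1%N); rewrite !xpair_eqE !eqxx /=; lia.
  apply: (@chain d d1 d2 h1 h2 r5 m (fun q => uf y q - m * (q == (d1 + d2, 1%N)))%N).
    by move=> q; rewrite hx; have := U q; have := hz q; lia.
  by move=> q; rewrite hy; have := hz q; lia.
- have -> : ut = uk by apply: Td_ext => q; rewrite hx hy (forget_uf hf).
  exact: rt_refl.
- have -> : ut = uk by apply: Td_ext => q; rewrite hx hy.
  exact: rt_refl.
- have [uy hu] := u_exists hd y.
  exact: rt_trans (IH1 _ _ hx hu) (IH2 _ _ hu hy).
Qed.

Definition Rm d (t : Td d) := Wt d (tmult t) (fun p => p.2 - 1)%N.

Lemma le_u d (hd : (0 < d)%N) : forall n (t u : Td d), (Rm t < n)%N -> is_u t u -> type_le t u.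
Proof.
elim=> // n IH t u hn hi.
case: (pselect (exists q, (0 < tmult t q)%N /\ q.2 <> 1%N)) => [[[b m] [hp hm]]|hno]; last first.
  have hu : unram t.
    move=> b m hp; case: (eqVneq m 1%N) => // hm; case: hno; exists (b, m); split => //.
    exact/eqP.
  rewrite (unram_u hd hu hi); exact: rt_refl.
have [/= hb0 hm0 hbd hmd] := tmult_supp hp.
simpl in hm.
pose g := fun q => (tmult t q - (q == (b, m)) + (q == (b, m - 1)) + (q == (b, 1%N)))%N.
have E : forall q, (g q + (q == (b, m)) = tmult t q + (q == (b, m - 1)) + (q == (b, 1%N)))%N.
  move=> q; rewrite /g; case: (eqVneq q (b, m)) => [->|ne].
    rewrite !xpair_eqE !eqxx /=; lia.
  rewrite /=; lia.
have [l Hl] : exists l : Td d, forall q, tmult l q = g q.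
  apply: mk_exists.
    move=> q; rewrite /g; case: (posnP (tmult t q)) => [h0|hq].
      rewrite h0 sub0n add0n.
      case: eqP => [-> _ /=|_]; first by split => //; lia.
      case: eqP => [-> _ /=|_] //; by split => //; lia.
    move=> _; exact: tmult_supp hq.
  have H := @Wt_step1 d g (tmult t) (fun p => p.1 * p.2) (b, m) (b, m - 1) (b, 1%N)
    ltac:(simpl; lia) ltac:(simpl; lia) ltac:(simpl; lia) ltac:(simpl; lia) ltac:(simpl; lia) ltac:(simpl; lia) E.
  move: H; rewrite Wt_weight /=.
  have Eb : (b * (m - 1) + b * 1 = b * m)%N by rewrite -mulnDr subnK.
  lia.
have hf : forget_step t l.
  exists b, m, 1%N; split => //; split; first lia.
  by move=> p; rewrite Hl E.
apply: rt_trans (rt_step _ _ _ _ (or_intror hf)) _.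
apply: (IH _ u).
  have HE : forall p, (tmult l p + (p == (b, m)) = tmult t p + (p == (b, m - 1)) + (p == (b, 1%N)))%N.
    by move=> p; rewrite Hl E.
  have := @forget_W d t l b m 1%N (fun p => p.2 - 1)%N (ltnSn 0) ltac:(lia) HE.
  rewrite /Rm /= in hn *; lia.
by move=> q; rewrite hi (forget_uf hf).
Qed.

Definition Nm d (t : Td d) := Wt d (tmult t) (fun _ => 1%N).

Lemma unram_pn d (a : Td d) q : unram a -> (0 < tmult a q)%N -> q = (q.1, 1%N).
Proof. by case: q => x y hu h; rewrite (hu x y h). Qed.

Lemma le_top d (hd : (0 < d)%N) (top : Td d) (htop : is_top top) :
  forall n (a : Td d), (Nm a < n)%N -> unram a -> type_le a top.
Proof.
elim=> // n IH a hn hu.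
have [p1 [hp1 _]] : exists p : pair_t d, (0 < tmult a (pn p))%N /\ (0 < (pn p).1 * (pn p).2)%N.
  by apply: (@Wt_pos_ex d (tmult a) (fun p => p.1 * p.2)%N); rewrite Wt_weight.
set b1 := (pn p1).1.
have e1 := unram_pn hu hp1; rewrite -/b1 in e1; rewrite e1 in hp1.
have [/= hb1 _ hb1d _] := tmult_supp hp1.
pose g1 := fun q => (tmult a q - (q == (b1, 1%N)))%N.
have E1 : forall q, (g1 q + (q == (b1, 1%N)) = tmult a q)%N.
  move=> q; rewrite /g1; case: (eqVneq q (b1, 1%N)) => [->|ne] /=; lia.
case: (posnP (Wt d g1 (fun _ => 1%N))) => [z|pos].
  have hz : forall p : pair_t d, g1 (pn p) = 0%N.
    move=> p; move/eqP: z; rewrite /Wt sum_nat_eq0 => /forallP /(_ p).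
    by rewrite muln1 => /eqP.
  have W0 : Wt d g1 (fun p => p.1 * p.2)%N = 0%N by apply: big1 => p _; rewrite hz.
  have E1' : forall q, (g1 q + (q == (b1, 1%N)) + (q == (b1, 1%N)) = tmult a q + (q == (b1, 1%N)))%N.
    by move=> q; rewrite E1.
  have := @Wt_step2 d g1 (tmult a) (fun p => p.1 * p.2)%N (b1, 1%N) (b1, 1%N) (b1, 1%N)
    hb1d hd hb1d hd hb1d hd E1'.
  rewrite W0 Wt_weight /= => eb.
  have bd : b1 = d by lia.
  have -> : a = top.
    apply: Td_ext => q; rewrite htop.
    case: (boolP ((q.1 <= d) && (q.2 <= d))%N) => [/andP [q1 q2]|qn].
      have := hz (inord q.1, inord q.2); rewrite /pn /= !inordK ?ltnS // -surjective_pairing.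
      have := E1 q; rewrite bd; lia.
    rewrite tmult_out //; case: eqP => // eq; move: qn; rewrite eq /= leqnn hd //.
  exact: rt_refl.
have [p2 [hp2 _]] := Wt_pos_ex pos.
have hpa2 : (0 < tmult a (pn p2))%N by move: hp2; rewrite /g1; lia.
set b2 := (pn p2).1.
have e2 := unram_pn hu hpa2; rewrite -/b2 in e2; rewrite e2 in hp2 hpa2.
have [/= hb2 _ hb2d _] := tmult_supp hpa2.
pose g2 := fun q => (g1 q - (q == (b2, 1%N)))%N.
have E2 : forall q, (g2 q + (q == (b1, 1%N)) + (q == (b2, 1%N)) = tmult a q)%N.
  move=> q; rewrite -E1 /g2; case: (eqVneq q (b2, 1%N)) => [->|ne] /=; lia.
have := @Wt_step0 d g2 (tmult a) (fun p => p.1 * p.2)%N (b1, 1%N) (b2, 1%N) hb1d hd hb2d hd E2.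
rewrite Wt_weight /= => eW.
have hb12 : (b1 + b2 <= d)%N by lia.
pose gc := fun q => (g2 q + (q == (b1 + b2, 1%N)))%N.
have Ec : forall q, (gc q + (q == (b1, 1%N)) + (q == (b2, 1%N)) = tmult a q + (q == (b1 + b2, 1%N)))%N.
  by move=> q; rewrite -E2 /gc; lia.
have [c Hc] : exists c : Td d, forall q, tmult c q = gc q.
  apply: mk_exists.
    move=> q; rewrite /gc; case: (posnP (g2 q)) => [h0|hq].
      rewrite h0 add0n; case: eqP => [-> _ /=|_ //]; split => //; lia.
    move=> _; apply: (tmult_supp (t := a)); have := E2 q; lia.
  have := @Wt_step2 d gc (tmult a) (fun p => p.1 * p.2)%N (b1, 1%N) (b2, 1%N) (b1 + b2, 1%N)
    hb1d hd hb2d hd hb12 hd Ec.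
  rewrite Wt_weight /=; lia.
have hs : step a c.
  by left; exists b1, b2, 1%N; split => // p; rewrite Hc Ec.
apply: rt_trans (rt_step _ _ _ _ hs) _.
apply: IH; last exact: unram_step hu hs.
have := @Wt_step2 d gc (tmult a) (fun _ => 1%N) (b1, 1%N) (b2, 1%N) (b1 + b2, 1%N)
    hb1d hd hb2d hd hb12 hd Ec.
have -> : Wt d gc (fun _ => 1%N) = Nm c by apply: Wt_ext => q; rewrite Hc.
rewrite /Nm in hn *; lia.
Qed.

Lemma u_ne_top d (t u top : Td d) : is_top top -> ramified t -> is_u t u -> u <> top.
Proof.
move=> htop [b [m [hp hm]]] hi e.
have [/= hb0 hm0 hbd hmd] := tmult_supp hp.
have H := Wt_ge (tmult t) (Fq b) ((inord b, inord m) : pair_t d).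
move: H; rewrite /pn /= !inordK ?ltnS // /Fq /= eqxx mul1n => H.
have H2 := hi (b, 1%N); rewrite e htop /uf /= in H2.
have h2 : (2 <= m)%N by lia.
have := leq_mul hp h2; move: H H2; rewrite /Fq; case: ((b, 1%N) == (d, 1%N)) => /=; lia.
Qed.

Lemma top_unram d (top : Td d) : is_top top -> unram top.
Proof. by move=> htop b m; rewrite htop xpair_eqE; case: eqP => //= _; case: eqP. Qed.

Lemma ram_not_unram d (t : Td d) : ramified t -> ~ unram t.
Proof. by move=> [b [m [hp hm]]] hu; apply: hm; exact: hu hp. Qed.

Lemma not_ram_unram d (t : Td d) : ~ ramified t -> unram t.
Proof.
move=> hn b m hp; case: (eqVneq m 1%N) => // hm; case: hn; exists b, m; split => //.
exact/eqP.
Qed.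

Import GRing.Theory.
Local Open Scope ring_scope.

Theorem proposition4 (d : nat) (hd : (0 < d)%N) (mu : Td d -> Td d -> int)
  (hmu : is_mobius mu) (tau top : Td d) (htop : is_top top)
  (hram : ramified tau) : mu tau top = 0%R.
Proof.
have key : forall n (t : Td d), (Mm t < n)%N -> ramified t -> mu t top = 0.
  elim=> // n IH t hn hr.
  have [ut hut] := u_exists hd t.
  have tle : type_le t ut := le_u hd (ltnSn _) hut.
  have uun : unram ut := u_unram hut.
  have ule : type_le ut top := le_top hd htop (ltnSn _) uun.
  have tle2 : type_le t top := rt_trans _ _ _ _ _ tle ule.
  have hne : ut != top by apply/eqP; exact: u_ne_top htop hr hut.
  have tnt : t != top.
    by apply/eqP => e; apply: (ram_not_unram hr); rewrite e; exact: top_unram.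
  have E1 := hmu t top tle2; have E2 := hmu ut top ule.
  rewrite (negbTE tnt) in E1; rewrite (negbTE hne) in E2.
  rewrite (bigD1 t) /= in E1; last by apply/asboolP; split; [exact: rt_refl | exact: tle2].
  rewrite (bigID (fun k => `[< ramified k >])) /= in E1.
  rewrite big1 in E1; last first.
    move=> k /andP [/andP [/asboolP [hk1 hk2] hkt] /asboolP hkr].
    apply: IH hkr; have := le_M hk1; case => [e|lt]; first by rewrite e eqxx in hkt.
    by apply: leq_trans lt _.
  rewrite add0r in E1.
  have EX : \sum_(i | `[< type_le t i /\ type_le i top >] && (i != t) && ~~ `[< ramified i >]) mu i top
         = \sum_(k | `[< type_le ut k /\ type_le k top >]) mu k top.
    apply: eq_bigl => k; apply/idP/idP.
    - move=> /andP [/andP [/asboolP [hk1 hk2] hkt] /asboolPn hnr].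
      have uk : unram k := not_ram_unram hnr.
      have [uk' huk] := u_exists hd k.
      have ek := unram_u hd uk huk.
      have hkk : is_u k k by move: huk; rewrite ek.
      apply/asboolP; split => //; exact (u_mono hd hk1 hut hkk).
    - move=> /asboolP [hk1 hk2].
      have uk : unram k := unram_le hk1 uun.
      apply/andP; split; [apply/andP; split|].
      + by apply/asboolP; split => //; exact: rt_trans _ _ _ _ _ tle hk1.
      + by apply/eqP => e; apply: (ram_not_unram hr); rewrite -e.
      + by apply/asboolPn => hr'; exact: ram_not_unram hr' uk.
  by rewrite EX E2 addr0 in E1.
exact: (key (Mm tau).+1 tau (ltnSn _) hram).
Qed.
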